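(* Let $A$ and $B$ be finite posets. Then: (1) $A^B=\emptyset$ if and only if $A=\emptyset$ and $B\neq\emptyset$. (2) $A^B$ is an antichain if and only if $A$ is an antichain or $B=\emptyset$; in that case $|A^B|=|A|^c$ if $A\neq\emptyset$ or $B\neq\emptyset$, where $c$ is the number of connected components of $B$, and $|A^B|=1$ if $A=B=\emptyset$. (3) Assume $A\neq\emptyset$ and let $f,g\in A^B$ with $f\le g$. Then $\mathrm{h}([f,g])=\mathrm{h}(A^B)$ (the height of the interval $[f,g]$ of $A^B$ equals the height of $A^B$) if and only if $f,g\in\mathcal D(A^B)$ and $\mathrm{h}([f(b),g(b)])=\mathrm{h}(A)$ for all $b\in B$, where $[f(b),g(b)]$ is an interval of $A$. (4) If $A\neq\emptyset$, then $\mathrm{h}(A^B)=\mathrm{h}(A)\,|B|$.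
   Context: For posets $P$ and $Q$, $P^Q$ denotes the set of order-preserving maps $Q\to P$, ordered pointwise: $f\le g$ iff $f(q)\le g(q)$ in $P$ for all $q\in Q$; in particular $P^\emptyset$ consists of the single empty map. $\mathcal D(P^Q)$ is the set of $g\in P^Q$ that are constant on each connected component of $Q$. For a finite non-empty poset $P$, its height $\mathrm{h}(P)$ is the largest value of $|K|-1$ over chains $K\subseteq P$. For $x\le y$ in a poset, $[x,y]=\{z: x\le z\le y\}$ is an interval, regarded as a poset. *)

(* Defs.v *)
From mathcomp Require Import all_boot all_order.
Set Implicit Arguments. Unset Strict Implicit. Unset Printing Implicit Defensive.
Import Order.Theory.
Local Open Scope order_scope.

Section Defs.
Variable T : finType.
Variable le : rel T.

Definition is_chain (S K : {set T}) : bool :=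
  (K \subset S) && [forall x in K, forall y in K, le x y || le y x].

(* height of the finite subposet S: max (|K| - 1) over chains K of S
   (equals 0 when S is empty; the paper only uses it for nonempty S) *)
Definition height (S : {set T}) : nat :=
  \max_(K : {set T} | is_chain S K) #|K|.-1.

Definition is_antichain (S : {set T}) : Prop :=
  forall x y, x \in S -> y \in S -> le x y -> x = y.
End Defs.

Section Posets.
Context {dA dB : Order.disp_t} (A : finPOrderType dA) (B : finPOrderType dB).

(* comparability relation on B; its connect-closure gives the components *)
Definition cmpB : rel B := fun x y => (x <= y) || (y <= x).

Definition ncompB : nat := n_comp cmpB B.

Definition homset : {set {ffun B -> A}} :=
  [set f : {ffun B -> A} | [forall x : B, forall y : B, (x <= y) ==> (f x <= f y)]].

Definition ffle : rel {ffun B -> A} := fun f g => [forall b : B, f b <= g b].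

Definition Dset : {set {ffun B -> A}} :=
  [set g in homset | [forall b : B, forall b' : B, connect cmpB b b' ==> (g b == g b')]].

Definition hom_interval (f g : {ffun B -> A}) : {set {ffun B -> A}} :=
  [set h in homset | ffle f h && ffle h g].

Definition A_interval (x y : A) : {set A} := [set z : A | (x <= z) && (z <= y)].
End Posets.

(* Main.v *)
Require Import Defs.
From mathcomp Require Import all_boot all_order.
From mathcomp Require Import zify.
Import Order.Theory.
Local Open Scope order_scope.
Set Implicit Arguments. Unset Strict Implicit. Unset Printing Implicit Defensive.
Section Gen.
Variable T : finType.
Variable le : rel T.
Hypothesis refl : reflexive le.
Hypothesis anti : antisymmetric le.
Hypothesis tr : transitive le.

Lemma chainP (S K : {set T}) : is_chain le S K <->
  (K \subset S /\ forall x y, x \in K -> y \in K -> le x y || le y x).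
Proof.
rewrite /is_chain; split.
  case/andP=> KS /forall_inP H; split=> // x y xK yK.
  by move/forall_inP: (H x xK); apply.
case=> KS H; rewrite KS /=; apply/forall_inP=> x xK; apply/forall_inP=> y yK.
exact: H.
Qed.

Lemma height_ge (S K : {set T}) : is_chain le S K -> (#|K|.-1 <= height le S)%N.
Proof. by move=> H; rewrite /height; apply: (@leq_bigmax_cond _ (fun K => is_chain le S K) (fun K : {set T} => #|K|.-1) K H). Qed.

Lemma height_leP (S : {set T}) n : (forall K, is_chain le S K -> #|K|.-1 <= n)%N ->
  (height le S <= n)%N.
Proof. by move=> H; apply/bigmax_leqP. Qed.

Lemma height_sub (S S' : {set T}) : S \subset S' -> (height le S <= height le S')%N.
Proof.
move=> SS; apply: height_leP=> K /chainP [KS H]; apply: height_ge.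
by apply/chainP; split=> //; apply: subset_trans SS.
Qed.

Lemma height_ex (S : {set T}) : exists K, is_chain le S K /\ #|K|.-1 = height le S.
Proof.
have : (0 < #|[pred K | is_chain le S K]|)%N.
  apply/card_gt0P; exists set0; rewrite inE; apply/chainP; split.
    exact: sub0set.
  by move=> x y; rewrite inE.
case/(eq_bigmax_cond (fun K : {set T} => #|K|.-1)) => K; rewrite inE => HK E.
by exists K; split=> //; rewrite /height -E; apply: eq_bigl => K'; rewrite inE.
Qed.

Lemma height_ex_ne (S : {set T}) x : x \in S ->
  exists K, [/\ is_chain le S K, (0 < #|K|)%N & #|K|.-1 = height le S].
Proof.
move=> xS; have [K [HK E]] := height_ex S.
case: (posnP #|K|) => K0; last by exists K.
exists [set x]; split; last by rewrite cards1 -E K0.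
  apply/chainP; split; first by rewrite sub1set.
  by move=> y z; rewrite !inE => /eqP-> /eqP->; rewrite refl.
by rewrite cards1.
Qed.

Lemma height_lt (S S' : {set T}) z x : S \subset S' -> z \in S' -> z \notin S ->
  (forall k, k \in S -> le k z || le z k) -> x \in S ->
  (height le S < height le S')%N.
Proof.
move=> SS zS' znS cmp xS.
have [K [/chainP [KS HK] K0 E]] := height_ex_ne xS.
have zK : z \notin K by apply: contra znS => /(subsetP KS).
have : is_chain le S' (z |: K).
  apply/chainP; split.
    by rewrite subUset sub1set zS' (subset_trans KS).
  move=> u v; rewrite !inE => /orP[/eqP->|uK] /orP[/eqP->|vK].
  - by rewrite refl.
  - by rewrite orbC; apply: cmp; apply: (subsetP KS).
  - by apply: cmp; apply: (subsetP KS).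
  - exact: HK.
move/height_ge; rewrite cardsU1 zK /= -E.
by case: #|K| K0.
Qed.

Definition rank x := height le [set z | le z x].

Lemma rank_lt x y : le x y -> x != y -> (rank x < rank y)%N.
Proof.
move=> lxy nxy; apply: (@height_lt _ _ y x).
- by apply/subsetP=> z; rewrite !inE => /tr; apply.
- by rewrite inE refl.
- rewrite inE; apply: contra nxy => lyx; apply/eqP/anti; rewrite lxy lyx.
  done.
- by move=> k; rewrite inE => lkx; rewrite (tr lkx lxy).
- by rewrite inE refl.
Qed.

Lemma chain_min (S K : {set T}) x : is_chain le S K -> x \in K ->
  exists2 m, m \in K & forall k, k \in K -> le m k.
Proof.
move=> /chainP [_ HK] xK.
case: (arg_minnP rank xK) => m mK mmin; exists m => // k kK.
case/orP: (HK m k mK kK) => // lkm.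
case: (eqVneq k m) => [->|nkm]; first exact: refl.
by have := rank_lt lkm nkm; rewrite ltnNge mmin.
Qed.

Lemma chain_max (S K : {set T}) x : is_chain le S K -> x \in K ->
  exists2 m, m \in K & forall k, k \in K -> le k m.
Proof.
move=> /chainP [_ HK] xK.
case: (arg_maxnP rank xK) => m mK mmax; exists m => // k kK.
case/orP: (HK m k mK kK) => // lkm.
case: (eqVneq m k) => [->|nkm]; first exact: refl.
by have := rank_lt lkm nkm; have := mmax k kK; rewrite /= ltnNge => ->.
Qed.

End Gen.
Lemma sum_lt (I : finType) (F G : I -> nat) i0 : (forall i, F i <= G i)%N ->
  (F i0 < G i0)%N -> (\sum_i F i < \sum_i G i)%N.
Proof.
move=> le lt; rewrite (bigD1 i0) //= [X in (_ < X)%N](bigD1 i0) //= -addSn.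
by apply: leq_add => //; apply: leq_sum.
Qed.

Lemma sum_eq (I : finType) (F G : I -> nat) : (forall i, F i <= G i)%N ->
  \sum_i F i = \sum_i G i -> forall i, F i = G i.
Proof.
move=> le eq i; apply/eqP; rewrite eqn_leq le /= leqNgt; apply/negP => lt.
by have := sum_lt le lt; rewrite eq ltnn.
Qed.

Section Main.
Context {dA dB : Order.disp_t} (A : finPOrderType dA) (B : finPOrderType dB).

Notation hA := (height (<=%O : rel A)).
Notation hF := (height (@ffle _ _ A B)).
Notation iv := (@A_interval _ A).

Lemma ffle_refl : reflexive (@ffle _ _ A B).
Proof. by move=> f; apply/forallP => b. Qed.
Lemma ffle_anti : antisymmetric (@ffle _ _ A B).
Proof.
move=> f g /andP[/forallP H1 /forallP H2]; apply/ffunP => b.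
by apply/le_anti; rewrite H1 H2.
Qed.
Lemma ffle_trans : transitive (@ffle _ _ A B).
Proof.
move=> g f h /forallP H1 /forallP H2; apply/forallP => b.
exact: le_trans (H1 b) (H2 b).
Qed.

Lemma fflP (f g : {ffun B -> A}) : reflect (forall b, f b <= g b) (ffle f g).
Proof. exact: forallP. Qed.

Lemma homP (f : {ffun B -> A}) :
  reflect (forall x y : B, x <= y -> f x <= f y) (f \in homset A B).
Proof.
rewrite inE; apply: (iffP forallP) => H.
  by move=> x y; move/forallP: (H x) => /(_ y) /implyP.
by move=> x; apply/forallP => y; apply/implyP; apply: H.
Qed.

Lemma intP (f g h : {ffun B -> A}) :
  (h \in hom_interval f g) = [&& h \in homset A B, ffle f h & ffle h g].
Proof. by rewrite /hom_interval in_set. Qed.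

Lemma ivP (x y z : A) : reflect (x <= z /\ z <= y) (z \in iv x y).
Proof. by rewrite inE; apply: andP. Qed.

Lemma iv_lt_up (x y z : A) : x <= y -> y < z -> (hA (iv x y) < hA (iv x z))%N.
Proof.
move=> xy yz.
apply: (@height_lt _ _ (@le_refl _ A) (iv x y) (iv x z) z x).
- apply/subsetP => w /ivP [xw wy]; apply/ivP; split => //.
  exact: le_trans wy (ltW yz).
- by apply/ivP; split => //; exact: le_trans xy (ltW yz).
- by apply/negP => /ivP [_ zy]; have := lt_le_trans yz zy; rewrite ltxx.
- by move=> k /ivP [_ ky]; rewrite (le_trans ky (ltW yz)).
- by apply/ivP.
Qed.

Lemma iv_lt_low (x y z : A) : x < y -> y <= z -> (hA (iv y z) < hA (iv x z))%N.
Proof.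
move=> xy yz.
apply: (@height_lt _ _ (@le_refl _ A) (iv y z) (iv x z) x y).
- apply/subsetP => w /ivP [yw wz]; apply/ivP; split => //.
  exact: le_trans (ltW xy) yw.
- by apply/ivP; split => //; exact: le_trans (ltW xy) yz.
- by apply/negP => /ivP [yx _]; have := lt_le_trans xy yx; rewrite ltxx.
- by move=> k /ivP [yk _]; rewrite (le_trans (ltW xy) yk) orbT.
- by apply/ivP.
Qed.

Lemma iv_same (x : A) : hA (iv x x) = 0%N.
Proof.
apply/eqP; rewrite -leqn0; apply: height_leP => K /chainP [KS _].
have : K \subset [set x].
  by apply/subsetP => w /(subsetP KS) /ivP [h1 h2]; rewrite inE eq_le h1 h2.
move/subset_leq_card; rewrite cards1; lia.
Qed.

Lemma iv_sub_top (x y : A) : (hA (iv x y) <= hA [set: A])%N.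
Proof. by apply: height_sub; apply: subsetT. Qed.

Lemma step (x z : A) : x < z ->
  exists2 a, x < a /\ a <= z & (hA (iv x z) <= (hA (iv a z)).+1)%N.
Proof.
move=> xz.
have [K [chK E]] := height_ex (<=%O : rel A) (iv x z).
have [/chainP [KS HK] _] := (chK, tt).
case: (set_0Vmem (K :\ x)) => [K0 | [m0 m0K]].
  exists z; first by split.
  rewrite -E.
  have : K \subset [set x] by rewrite -setD_eq0 K0.
  move/subset_leq_card; rewrite cards1; lia.
have chK' : is_chain (<=%O : rel A) (iv x z) (K :\ x).
  apply/chainP; split; first exact: subset_trans (subsetDl _ _) KS.
  by move=> u v /setD1P [_ uK] /setD1P [_ vK]; apply: HK.
have [m mK' mmin] := chain_min (@le_refl _ A) (@le_anti _ A) (@le_trans _ A) chK' m0K.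
have /setD1P [mx mK] := mK'.
have /ivP [xm mz] := subsetP KS m mK.
exists m; first by rewrite lt_neqAle eq_sym mx xm.
have : is_chain (<=%O : rel A) (iv m z) (K :\ x).
  apply/chainP; split; last by move: chK' => /chainP [].
  apply/subsetP => k kK'; apply/ivP; split; first exact: mmin.
  by have /setD1P [_ /(subsetP KS) /ivP []] := kK'.
move/height_ge; rewrite -E (cardsD1 x K).
have : (0 < #|K :\ x|)%N by apply/card_gt0P; exists m0.
lia.
Qed.


Lemma UB (I : B -> {set A}) (S : {set {ffun B -> A}}) :
  (forall k b, k \in S -> k b \in I b) ->
  (hF S <= \sum_b hA (I b))%N.
Proof.
move=> SI; apply: height_leP => K /chainP [KS HK].
pose r b (a : A) := hA (I b :&: [set z | z <= a]).
pose phi (k : {ffun B -> A}) := (\sum_b r b (k b))%N.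
set N := (\sum_b hA (I b))%N.
have rle b a : (r b a <= hA (I b))%N by apply: height_sub; apply: subsetIl.
have rmono b a a' : a <= a' -> (r b a <= r b a')%N.
  move=> aa'; apply: height_sub; apply: setIS; apply/subsetP => z.
  by rewrite !inE => za; apply: le_trans aa'.
have rstrict b a a' : a \in I b -> a' \in I b -> a < a' -> (r b a < r b a')%N.
  move=> aI a'I aa'.
  apply: (@height_lt _ _ (@le_refl _ A) _ _ a' a).
  - by apply: setIS; apply/subsetP => z; rewrite !inE => za; apply: le_trans (ltW aa').
  - by rewrite !inE a'I lexx.
  - by rewrite !inE a'I /=; apply/negP => H; have := lt_le_trans aa' H; rewrite ltxx.
  - by move=> k; rewrite !inE => /andP [_ ka]; rewrite (le_trans ka (ltW aa')).
  - by rewrite !inE aI lexx.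
have philt k k' : k \in K -> k' \in K -> ffle k k' -> k != k' -> (phi k < phi k')%N.
  move=> kK k'K /fflP kk' nkk'.
  have [b0 nb0] : exists b0, k b0 != k' b0.
    apply/existsP; apply: contraR nkk' => /existsPn H.
    by apply/eqP/ffunP => b; apply/eqP/negPn/H.
  apply: (@sum_lt _ _ _ b0) => [b|]; first exact: rmono.
  apply: rstrict; rewrite ?SI //; try exact: (subsetP KS).
  by rewrite lt_neqAle nb0 kk'.
have phile k : (phi k <= N)%N by apply: leq_sum => b _; apply: rle.
have inj : {in K &, injective (fun k => (inord (phi k) : 'I_N.+1))}.
  move=> k k' kK k'K /(congr1 val) /=; rewrite !inordK ?ltnS ?phile // => E.
  apply/eqP; apply/negP => /negP nkk'.
  case/orP: (HK k k' kK k'K) => H.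
    by have := philt _ _ kK k'K H nkk'; rewrite E ltnn.
  by have := philt _ _ k'K kK H; rewrite eq_sym E ltnn => /(_ nkk').
have := max_card [set (inord (phi k) : 'I_N.+1) | k in K].
rewrite card_in_imset // card_ord; lia.
Qed.


Lemma LB (f g : {ffun B -> A}) : f \in homset A B -> g \in homset A B -> ffle f g ->
  (\sum_b hA (iv (f b) (g b)) <= hF (hom_interval f g))%N.
Proof.
move=> + gH.
suff H : forall n f, f \in homset A B -> ffle f g ->
  (\sum_b hA (iv (f b) (g b)) <= n)%N ->
  (\sum_b hA (iv (f b) (g b)) <= hF (hom_interval f g))%N.
  by move=> fH fg; apply: (H _ f fH fg (leqnn _)).
elim=> [|n IH] {}f fH fg Hn.
  by apply: leq_trans Hn _.
case: (boolP [exists b, f b != g b]) => [/existsP [b1 nb1] | /existsPn Heq]; last first.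
  rewrite big1 // => b _; have /negPn/eqP -> := Heq b; exact: iv_same.
pose rB := rank (<=%O : rel B).
case: (@arg_maxnP _ b1 (fun i => f i != g i) rB nb1) => b nb bmax.
have bmaxP v : b < v -> f v = g v.
  move=> bv; apply/eqP; apply/negPn/negP => nv.
  have := rank_lt (@le_refl _ B) (@le_anti _ B) (@le_trans _ B) (ltW bv).
  rewrite lt_eqF //= => /(_ isT); have := bmax v nv; rewrite /= leqNgt => /negP; done.
have /fflP fgP := fg; have /homP fP := fH; have /homP gP := gH.
have xz : f b < g b by rewrite lt_neqAle nb fgP.
have [a [xa az] Ha] := step xz.
pose f' := [ffun u => if u == b then a else f u].
have f'H : f' \in homset A B.
  apply/homP => u v uv; rewrite !ffunE.
  case: (eqVneq u b) => [eu|nu]; case: (eqVneq v b) => [ev|nv].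
  - exact: lexx.
  - have bv : b < v by rewrite lt_neqAle eq_sym nv -eu uv.
    by rewrite (bmaxP v bv); apply: le_trans az (gP _ _ (ltW bv)).
  - by apply: le_trans (ltW xa); rewrite -ev fP.
  - exact: fP.
have f'g : ffle f' g by apply/fflP => u; rewrite ffunE; case: eqVneq => [->|] //.
have ff' : ffle f f' by apply/fflP => u; rewrite ffunE; case: eqVneq => [->|] //; rewrite ltW.
have nff' : f != f'.
  apply/negP => /eqP E; have := congr1 (fun h : {ffun B -> A} => h b) E; rewrite /= ffunE eqxx => fa; by rewrite fa ltxx in xa.
have Esum : (\sum_b0 hA (iv (f b0) (g b0)) = hA (iv (f b) (g b)) +
       \sum_(b0 | b0 != b) hA (iv (f' b0) (g b0)))%N.
  rewrite (bigD1 b) //=; congr addn; apply: eq_bigr => u nu.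
  by rewrite ffunE (negbTE nu).
have Esum' : (\sum_b0 hA (iv (f' b0) (g b0)) = hA (iv a (g b)) +
       \sum_(b0 | b0 != b) hA (iv (f' b0) (g b0)))%N.
  by rewrite (bigD1 b) //= ffunE eqxx.
have lt1 := iv_lt_low xa az.
have IH' := IH f' f'H f'g.
have Hlt : (hF (hom_interval f' g) < hF (hom_interval f g))%N.
  apply: (@height_lt _ _ ffle_refl _ _ f f').
  - apply/subsetP => h; rewrite !intP => /and3P [-> f'h ->].
    by rewrite (ffle_trans ff' f'h).
  - by rewrite !intP fH ffle_refl fg.
  - rewrite !intP fH fg /= andbT; apply/negP => f'f.
    move: nff'; rewrite (@ffle_anti f f') ?eqxx //; by apply/andP; split.
  - move=> k; rewrite !intP => /and3P [_ f'k _]; apply/orP; right; exact: ffle_trans ff' f'k.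
  - by rewrite !intP f'H ffle_refl f'g.
move: Hn IH' Hlt; rewrite Esum Esum'; lia.
Qed.


Lemma noel (T : finType) (x : T) : #|T| = 0%N -> False.
Proof. move=> H; have := card0_eq H x; rewrite !inE. done. Qed.

Lemma cmpB_sym : symmetric (@cmpB _ B).
Proof. by move=> x y; rewrite /cmpB orbC. Qed.

Lemma csym : connect_sym (@cmpB _ B).
Proof. exact: sym_connect_sym cmpB_sym. Qed.

Lemma constP (h : B -> A) : (forall u v : B, u <= v -> h u = h v) ->
  forall u v, connect (@cmpB _ B) u v -> h u = h v.
Proof.
move=> H u v /connectP [p + ->]; elim: p u => [|w p IHp] u //=.
move=> /andP [uw pw]; rewrite -(IHp w pw).
by move: uw; rewrite /cmpB => /orP [/H|/H ->].
Qed.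

Lemma Dmem (h : {ffun B -> A}) : h \in homset A B ->
  (forall u v : B, u <= v -> h u = h v) -> h \in Dset A B.
Proof.
move=> hH H; rewrite /Dset in_set hH /=; apply/forallP => u; apply/forallP => v.
by apply/implyP => /(constP H) ->.
Qed.

Lemma hint_eq (f g : {ffun B -> A}) : f \in homset A B -> g \in homset A B -> ffle f g ->
  hF (hom_interval f g) = (\sum_b hA (iv (f b) (g b)))%N.
Proof.
move=> fH gH fg; apply/eqP; rewrite eqn_leq LB // andbT.
apply: UB => k b; rewrite intP => /and3P [_ /fflP fk /fflP kg].
by apply/ivP.
Qed.

Lemma hS_le : (hF (homset A B) <= hA [set: A] * #|B|)%N.
Proof.
rewrite mulnC -sum_nat_const; apply: (UB (I := fun _ => [set: A])) => k b _.
by rewrite inE.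
Qed.

Lemma part4 : #|A| <> 0%N -> hF (homset A B) = (hA [set: A] * #|B|)%N.
Proof.
move=> A0; apply/eqP; rewrite eqn_leq hS_le /=.
have [a0 _] : exists a0 : A, true.
  by case: (posnP #|A|) => // /card_gt0P [a0 _]; exists a0.
have [K [chK K0 E]] := height_ex_ne (@le_refl _ A) (in_setT a0).
have [k0 k0K] : exists k0, k0 \in K by apply/card_gt0P.
have [x xK xmin] := chain_min (@le_refl _ A) (@le_anti _ A) (@le_trans _ A) chK k0K.
have [y yK ymax] := chain_max (@le_refl _ A) (@le_anti _ A) (@le_trans _ A) chK k0K.
have KI : is_chain (<=%O : rel A) (iv x y) K.
  move: chK => /chainP [_ HK]; apply/chainP; split => //.
  by apply/subsetP => k kK; apply/ivP; split; [apply: xmin | apply: ymax].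
have hxy := height_ge KI; rewrite E in hxy.
pose cf : {ffun B -> A} := [ffun => x]; pose cg : {ffun B -> A} := [ffun => y].
have cfH : cf \in homset A B by apply/homP => u v _; rewrite !ffunE.
have cgH : cg \in homset A B by apply/homP => u v _; rewrite !ffunE.
have cfg : ffle cf cg by apply/fflP => u; rewrite !ffunE; apply: ymax.
have := LB cfH cgH cfg.
have -> : (\sum_b hA (iv (cf b) (cg b)) = \sum_(b : B) hA (iv x y))%N.
  by apply: eq_bigr => b _; rewrite !ffunE.
rewrite sum_nat_const => H1.
have H2 : (hF (hom_interval cf cg) <= hF (homset A B))%N.
  by apply: height_sub; apply/subsetP => h; rewrite intP => /and3P [].
apply: leq_trans H2; apply: leq_trans H1; rewrite mulnC leq_mul2l hxy orbT //.
Qed.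

Lemma part3 : #|A| <> 0%N -> forall f g : {ffun B -> A},
     f \in homset A B -> g \in homset A B -> ffle f g ->
     (hF (hom_interval f g) = hF (homset A B) <->
      [/\ f \in Dset A B, g \in Dset A B &
          forall b : B, hA (iv (f b) (g b)) = hA [set: A]]).
Proof.
move=> A0 f g fH gH fg; rewrite part4 // hint_eq //.
have /fflP fgP := fg; have /homP fP := fH; have /homP gP := gH.
have allb : (\sum_b hA (iv (f b) (g b)))%N = (hA [set: A] * #|B|)%N <->
     forall b, hA (iv (f b) (g b)) = hA [set: A].
  rewrite mulnC -sum_nat_const; split.
    by apply: sum_eq => b; apply: iv_sub_top.
  by move=> H; apply: eq_bigr => b _; apply: H.
rewrite allb; split; last by case.
move=> H; split => //.
- apply: Dmem => // u v uv; apply/eqP; apply/negP => /negP ne.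
  have lt : f u < f v by rewrite lt_neqAle ne fP.
  have := iv_lt_low lt (fgP v); rewrite H.
  have := iv_sub_top (f u) (g v); rewrite leqNgt => /negP; done.
- apply: Dmem => // u v uv; apply/eqP; apply/negP => /negP ne.
  have lt : g u < g v by rewrite lt_neqAle ne gP.
  have := iv_lt_up (fgP u) lt; rewrite H.
  have := iv_sub_top (f u) (g v); rewrite leqNgt => /negP; done.
Qed.


Lemma ncomp_le : (ncompB B <= #|B|)%N.
Proof. exact: max_card. Qed.

Lemma count_hom : (is_antichain (<=%O : rel A) [set: A] \/ #|B| = 0%N) ->
  #|homset A B| = (#|A| ^ ncompB B)%N.
Proof.
move=> Hac.
pose U := {x : B | roots (@cmpB _ B) x}.
have cardU : #|{: U}| = ncompB B.
  by rewrite card_sig /ncompB; apply: eq_card => x; rewrite !inE andbT.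
pose Phi (phi : {ffun U -> A}) : {ffun B -> A} :=
  [ffun b => phi (exist _ (root (@cmpB _ B) b) (roots_root csym b))].
have PhiE phi x y : root (@cmpB _ B) x = root (@cmpB _ B) y -> Phi phi x = Phi phi y.
  by move=> E; rewrite !ffunE; congr (phi _); apply: val_inj.
have Phi_inj : injective Phi.
  move=> phi psi E; apply/ffunP => -[x Px].
  have := congr1 (fun h : {ffun B -> A} => h x) E; rewrite !ffunE.
  have -> : exist _ (root (@cmpB _ B) x) (roots_root csym x) = exist _ x Px :> U.
    by apply: val_inj; rewrite /= (eqP Px).
  done.
have -> : homset A B = [set Phi phi | phi in {ffun U -> A}].
  apply/setP => h; apply/idP/imsetP.
    move=> hH; exists [ffun u => h (val u)] => //.
    have Hc : forall u v : B, u <= v -> h u = h v.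
      move=> u v uv; case: Hac => [Hac | HB]; last by case: (noel u HB).
      by apply: Hac; rewrite ?inE //; move/homP: hH; apply.
    apply/ffunP => b; rewrite !ffunE /=; apply: constP Hc _ _ _.
    exact: connect_root.
  case=> phi _ ->; apply/homP => u v uv.
  rewrite (@PhiE phi u v) //; apply/rootP; first exact: csym.
  by apply: connect1; rewrite /cmpB uv.
by rewrite card_imset // card_ffun cardU.
Qed.

Lemma part1 : (homset A B = set0 <-> (#|A| = 0 /\ #|B| <> 0))%N.
Proof.
split.
  move=> E; split.
    case: (posnP #|A|) => // /card_gt0P [a _].
    have : [ffun => a] \in homset A B by apply/homP => u v _; rewrite !ffunE.
    by rewrite E inE.
  move=> B0.
  have : (0 < #|{ffun B -> A}|)%N by rewrite card_ffun B0.
  case/card_gt0P => f _.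
  have : f \in homset A B by apply/homP => u; case: (noel u B0).
  by rewrite E inE.
case=> A0 B0; apply/setP => f; rewrite inE.
case: (posnP #|B|) => // /card_gt0P [b _].
case: (noel (f b) A0).
Qed.

Lemma part2 : is_antichain (@ffle _ _ A B) (homset A B) <->
     (is_antichain (<=%O : rel A) [set: A] \/ #|B| = 0%N).
Proof.
split.
  move=> H; case: (posnP #|B|) => [|/card_gt0P [b0 _]]; first by right.
  left => x y _ _ xy.
  pose cx : {ffun B -> A} := [ffun => x]; pose cy : {ffun B -> A} := [ffun => y].
  have E : cx = cy.
    apply: H.
    - by apply/homP => u v _; rewrite !ffunE.
    - by apply/homP => u v _; rewrite !ffunE.
    - by apply/fflP => u; rewrite !ffunE.
  by have := congr1 (fun h : {ffun B -> A} => h b0) E; rewrite !ffunE.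
case=> [H | B0] f g _ _ /fflP fg; apply/ffunP => b.
  by apply: H; rewrite ?inE.
case: (noel b B0).
Qed.

End Main.

Unset Implicit Arguments.
Theorem lemma9 (dA dB : Order.disp_t) (A : finPOrderType dA) (B : finPOrderType dB) :
  (* (1) *)
  (homset A B = set0 <-> (#|A| = 0 /\ #|B| <> 0))%N /\
  (* (2) *)
  (is_antichain (@ffle _ _ A B) (homset A B) <->
     (is_antichain (<=%O : rel A) [set: A] \/ #|B| = 0%N)) /\
  (is_antichain (@ffle _ _ A B) (homset A B) ->
     ((#|A| <> 0 \/ #|B| <> 0) -> #|homset A B| = (#|A| ^ ncompB B)%N) /\
     ((#|A| = 0 /\ #|B| = 0) -> #|homset A B| = 1%N)) /\
  (* (3) *)
  (#|A| <> 0%N -> forall f g : {ffun B -> A},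
     f \in homset A B -> g \in homset A B -> ffle f g ->
     (height (@ffle _ _ A B) (hom_interval f g) = height (@ffle _ _ A B) (homset A B) <->
      [/\ f \in Dset A B, g \in Dset A B &
          forall b : B, height (<=%O : rel A) (A_interval (f b) (g b))
                        = height (<=%O : rel A) [set: A]])) /\
  (* (4) *)
  (#|A| <> 0%N -> height (@ffle _ _ A B) (homset A B) = (height (<=%O : rel A) [set: A] * #|B|)%N).
Proof.
split; first exact: part1.
split; first exact: part2.
split.
  move=> /part2 H; split; first by move=> _; apply: count_hom.
  case=> _ B0; rewrite count_hom //.
  by have := @ncomp_le _ B; rewrite B0 leqn0 => /eqP ->.
split; first exact: part3.
exact: part4.
Qed.
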